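(* Let $h_{m,n}(x)=S_{(n^m)}(x,\tfrac16,0,0,\ldots)$ for integers $m,n\ge0$. Then for all $m,n\ge0$, $$\big(D_x^2-3xD_x+3m\big)h_{m,n+1}\cdot h_{m,n}=0,\quad \big(D_x^2-3xD_x+3(m-n)\big)h_{m,n+1}\cdot h_{m+1,n}=0,\quad \big(D_x^2-3xD_x-3n\big)h_{m,n}\cdot h_{m+1,n}=0.$$
   Context: $(n^m)$ is the rectangular partition with $m$ parts equal to $n$. Schur functions: $S_\lambda(t)=\det(p_{\lambda_i-i+j}(t))_{1\le i,j\le l(\lambda)}$ with $\sum_{n\ge0}p_n(t)z^n=\exp(\sum_{k\ge1}t_kz^k)$, $p_n=0$ for $n<0$, $S_\emptyset=1$. Hirota operators: $D_xF\cdot G=F'G-FG'$, $D_x^2F\cdot G=F''G-2F'G'+FG''$. *)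

(* Defs.v *)
From mathcomp Require Import all_boot all_order all_algebra.
Set Implicit Arguments. Unset Strict Implicit. Unset Printing Implicit Defensive.
Import GRing.Theory Num.Theory.
Local Open Scope ring_scope.

(* p_n(t) at t = (x, 1/6, 0, 0, ...): the coefficient of z^n in
   exp(x z + z^2/6) = exp(x z) * exp(z^2/6), i.e.
   p_n = sum_{k <= n/2} (1/6)^k / k! * x^(n-2k) / (n-2k)!  *)
Definition pS (n : nat) : {poly rat} :=
  \sum_(k < n./2.+1)
     ((6 ^ k * k`! * (n - 2 * k)`!)%:R)^-1 *: 'X^(n - 2 * k).

Definition pZ (k : int) : {poly rat} :=
  match k with Posz n => pS n | Negz _ => 0 end.

(* Schur function of the rectangular partition (n^m) at t = (x,1/6,0,...):
   det (p_{lambda_i - i + j})_{1 <= i,j <= m} with lambda_i = n.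
   (For n = 0 the matrix is unitriangular so the value is 1 = S_emptyset;
    for m = 0 the empty determinant is 1.) *)
Definition h (m n : nat) : {poly rat} :=
  \det (\matrix_(i < m, j < m) pZ (n%:Z - i%:Z + j%:Z)).

Definition Dx (F G : {poly rat}) : {poly rat} := F^`() * G - F * G^`().
Definition Dx2 (F G : {poly rat}) : {poly rat} :=
  F^`(2) * G - 2%:R * (F^`() * G^`()) + F * G^`(2).

Definition hirota (c : int) (F G : {poly rat}) : {poly rat} :=
  Dx2 F G - 3%:R * ('X * Dx F G) + c%:~R *: (F * G).

(* Main.v *)
Require Import Defs.
From mathcomp Require Import all_boot all_order all_algebra all_fingroup.
From mathcomp Require Import zify ring lra.
Set Implicit Arguments. Unset Strict Implicit. Unset Printing Implicit Defensive.
Import GRing.Theory Num.Theory.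
Local Open Scope ring_scope.

Lemma coef_pS n j : (pS n)`_j =
  if (j <= n)%N && ~~ odd (n - j) then ((6 ^ ((n - j)./2) * ((n - j)./2)`! * j`!)%:R)^-1 else 0.
Proof.
rewrite /pS coef_sum.
have h2 : (2 * n./2 <= n)%N.
  by have := odd_double_half n; rewrite -muln2; lia.
case: ifP => H.
  move/andP: H => [Hj Ho].
  have e2 : (2 * (n - j)./2 = n - j)%N.
    by have := odd_double_half (n - j); rewrite (negbTE Ho) -muln2; lia.
  have hk : ((n - j)./2 < n./2.+1)%N.
    rewrite ltnS; apply: half_leq; lia.
  rewrite (bigD1 (Ordinal hk)) //= big1 ?addr0.
    rewrite coefZ coefXn.
    have -> : (n - 2 * (n - j)./2)%N = j by lia.
    by rewrite eqxx mulr1.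
  move=> k /eqP Hk; rewrite coefZ coefXn.
  case: eqP => [E|]; last by rewrite mulr0.
  exfalso; apply: Hk; apply: val_inj => /=.
  have hk2 : (k <= n./2)%N by have := ltn_ord k; lia.
  have : (2 * k <= n)%N by lia.
  lia.
rewrite big1 // => k _; rewrite coefZ coefXn.
case: eqP => [E|]; last by rewrite mulr0.
exfalso.
have hk2 : (k <= n./2)%N by have := ltn_ord k; lia.
have h3 : (2 * k <= n)%N by lia.
move: H; have -> : (n - j = 2 * k)%N by lia.
rewrite oddM /=.
have -> : (j <= n)%N by lia.
by [].
Qed.


Ltac nzt := repeat (apply/andP; split); rewrite ?nat1r ?natr1 -?natrD -?natrM pnatr_eq0 -lt0n ?expn_gt0 ?fact_gt0 ?muln_gt0 ?expn_gt0 ?fact_gt0 ?addn_gt0 ?orbT //.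

Lemma nz_nat (a : nat) : (0 < a)%N -> (a%:R : rat) != 0.
Proof. by move=> h; rewrite pnatr_eq0 -lt0n. Qed.

Lemma deriv_pS n : (pS n.+1)^`() = pS n.
Proof.
apply/polyP => i; rewrite coef_deriv !coef_pS ltnS subSS.
case: ifP => _; last by rewrite mul0rn.
set a := (n - i)./2.
rewrite factS !natrM -mulr_natr.
have h1 := nz_nat (expn_gt0 6 a). have h2 := nz_nat (fact_gt0 a).
have h3 := nz_nat (fact_gt0 i). have h4 : (i.+1%:R : rat) != 0 by rewrite nz_nat.
field; nzt.
Qed.

Lemma deriv_pS0 : (pS 0)^`() = 0.
Proof. by apply/polyP => i; rewrite coef_deriv coef_pS coef0 /= mul0rn. Qed.

Lemma pS0 : pS 0 = 1.
Proof. by apply/polyP => i; rewrite coef_pS coef1; case: i => //=; rewrite invr1. Qed.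

Lemma pS1 : pS 1 = 'X.
Proof. by apply/polyP => i; rewrite coef_pS coefX; case: i => [|[|i]] //=; rewrite invr1. Qed.

Lemma rec_pS n : pS n = pS n.+2 *+ (3 * n.+2) - ('X * pS n.+1) *+ 3.
Proof.
apply/polyP => j; rewrite coefB !coefMn coefXM !coef_pS.
case: j => [|j] /=.
  rewrite !subn0 /= negbK mul0rn subr0.
  case: ifP => Ho; last by rewrite mul0rn.
  have [k Ek] : exists k, n = (2 * k)%N.
    by exists n./2; have := odd_double_half n; rewrite (negbTE Ho) -muln2 /=; lia.
  rewrite Ek.
  have -> : (2 * k)./2 = k by rewrite mulnC muln2 doubleK.
  rewrite fact0 !muln1 factS expnS -mulr_natr !natrM.
  have h1 := nz_nat (expn_gt0 6 k). have h2 := nz_nat (fact_gt0 k).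
  field; nzt.
case: (ltngtP j.+1 n.+2) => hj.
- case: (ltnP j n) => hjn; last first.
    have -> : j = n by lia.
    have -> : (n.+2 - n.+1 = 1)%N by lia.
    have -> : (n.+1 - n = 1)%N by lia.
    by rewrite /= ?andbF !mul0rn ?subr0.
  have [e He] : exists e, n = (j.+1 + e)%N by exists (n - j.+1)%N; lia.
  subst n.
  have -> : ((j.+1 + e) - j.+1 = e)%N by lia.
  have -> : ((j.+1 + e).+2 - j.+1 = e.+2)%N by lia.
  have -> : ((j.+1 + e).+1 - j = e.+2)%N by lia.
  have -> : (j <= (j.+1 + e).+1)%N by lia.
  rewrite /= negbK.
  case: ifP => Ho; last by rewrite !mul0rn subr0.
  have [k Ek] : exists k, e = (2 * k)%N.
    by exists e./2; have := odd_double_half e; rewrite (negbTE Ho) -muln2 /=; lia.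
  rewrite Ek.
  have -> : (2 * k)./2 = k by rewrite mulnC muln2 doubleK.
  rewrite !factS expnS -(mulr_natr _ 3) -(mulr_natr _ (3 * _)) !natrM.
  have h1 := nz_nat (expn_gt0 6 k). have h2 := nz_nat (fact_gt0 k).
  have h3 := nz_nat (fact_gt0 j).
  have -> : ((j.+1 + 2 * k).+2 = j + 2 * k + 3)%N by lia.
  rewrite !natrD ?natrM.
  field; nzt.
- have -> : (j < n)%N = false by lia.
  have -> : (j <= n.+1)%N = false by lia.
  by rewrite /= !mul0rn subr0.
- have -> : j = n.+1 by lia.
  have -> : (n.+1 < n)%N = false by lia.
  rewrite !subnn ltnSn /= expn0 !mul1n factS -(mulr_natr _ 3) -(mulr_natr _ (3 * _)) !natrM.
  have h3 := nz_nat (fact_gt0 n.+1).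
  field; nzt.
Qed.

Lemma pZ_neg (k : int) : (k < 0)%R -> pZ k = 0.
Proof. by case: k. Qed.

Lemma pZ_pos (n : nat) : pZ n = pS n.
Proof. by []. Qed.

Lemma deriv_pZ (k : int) : (pZ k)^`() = pZ (k - 1).
Proof.
case: k => [[|n]|n].
- by rewrite pZ_pos deriv_pS0 pZ_neg.
- have -> : (n.+1%:Z - 1 = n%:Z)%R by lia.
  by rewrite !pZ_pos deriv_pS.
- by rewrite !pZ_neg ?deriv0 //; lia.
Qed.

Lemma rec_pZ (k : int) :
  pZ (k - 2) = (k%:~R * 3%:R) * pZ k - 3%:R * ('X * pZ (k - 1)).
Proof.
case: k => [[|[|n]]|n].
- rewrite [pZ (_ - 2)]pZ_neg ?[pZ (_ - 1)]pZ_neg; try lia.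
  rewrite mulr0z !mul0r; ring.
- rewrite [pZ (_ - 2)]pZ_neg; last by lia.
  have -> : (1%:Z - 1 = 0%:Z)%R by lia.
  by rewrite !pZ_pos pS0 pS1 mulr1 mul1r subrr.
- have -> : (n.+2%:Z - 2 = n%:Z)%R by lia.
  have -> : (n.+2%:Z - 1 = n.+1%:Z)%R by lia.
  rewrite !pZ_pos rec_pS.
  have -> : ((n.+2)%:Z%:~R = (n.+2)%:R :> {poly rat}) by [].
  ring.
- rewrite [pZ (_ - 2)]pZ_neg ?[pZ (_ - 1)]pZ_neg ?(@pZ_neg (Negz n)); try lia.
  ring.
Qed.

Notation P := {poly rat}.

Lemma deriv1P : (1 : P)^`() = 0.
Proof. by rewrite -polyC1 derivC. Qed.

Lemma deriv_sign (b : bool) : ((-1) ^+ b : P)^`() = 0.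
Proof. by case: b; rewrite /= ?expr1 ?expr0 ?derivN deriv1P ?oppr0. Qed.

Lemma deriv_prod_seq (I : eqType) (r : seq I) (F : I -> P) : uniq r ->
  (\prod_(i <- r) F i)^`() =
  \sum_(i <- r) \prod_(j <- r) (if j == i then (F j)^`() else F j).
Proof.
elim: r => [|a r IH] /=; first by rewrite !big_nil deriv1P.
move=> /andP [anr ur].
rewrite big_cons derivM IH // big_cons big_cons eqxx.
congr (_ + _).
  congr (_ * _); rewrite big_seq_cond [RHS]big_seq_cond; apply: eq_bigr => j /andP [jr _].
  by case: eqP => // E; move: anr; rewrite -E jr.
rewrite big_distrr; rewrite big_seq_cond [RHS]big_seq_cond; apply: eq_bigr => i /andP [ir _].
rewrite big_cons; case: eqP => [E|_] //.
by move: anr; rewrite E ir.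
Qed.

Lemma deriv_det n (f : 'I_n -> 'I_n -> P) :
  (\det (\matrix_(i, j) f i j))^`() =
  \sum_(i < n) \det (\matrix_(k, j) if k == i then (f k j)^`() else f k j).
Proof.
rewrite /determinant raddf_sum /=.
rewrite exchange_big /=; apply: eq_bigr => s _.
rewrite derivM deriv_sign mul0r add0r -big_distrr /=; congr (_ * _).
rewrite deriv_prod_seq ?index_enum_uniq //.
apply: eq_bigr => i _; apply: eq_bigr => k _.
by rewrite !mxE; case: eqP.
Qed.

Lemma det_weight n (f : 'I_n -> 'I_n -> P) (a b : 'I_n -> P) :
  \sum_(i < n) \det (\matrix_(k, j) if k == i then (a j + b k) * f k j else f k j)
  = (\sum_j a j + \sum_k b k) * \det (\matrix_(k, j) f k j).
Proof.
rewrite /determinant exchange_big big_distrr /=; apply: eq_bigr => s _.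
rewrite -big_distrr /= mulrCA; congr (_ * _).
transitivity (\sum_(i < n) (a (s i) + b i) * \prod_k f k (s k)).
  apply: eq_bigr => i _.
  rewrite (bigD1 i) //= [in RHS](bigD1 i) //= !mxE eqxx -mulrA; congr (_ * (_ * _)).
  by apply: eq_bigr => k hk; rewrite !mxE (negbTE hk).
rewrite -big_distrl /=; congr (_ * _).
  by rewrite big_split /= [in RHS](reindex_inj (@perm_inj _ s)).
by apply: eq_bigr => k _; rewrite mxE.
Qed.

Lemma det_rowlin n (f g h : 'I_n -> 'I_n -> P) (i : 'I_n) (al be : P) :
  \det (\matrix_(k, j) if k == i then al * g k j + be * h k j else f k j) =
  al * \det (\matrix_(k, j) if k == i then g k j else f k j) +
  be * \det (\matrix_(k, j) if k == i then h k j else f k j).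
Proof.
apply: (determinant_multilinear (i0 := i)).
- by apply/rowP => j; rewrite !mxE eqxx.
- by apply/matrixP => k j; rewrite !mxE eq_sym (negbTE (neq_lift i k)).
- by apply/matrixP => k j; rewrite !mxE eq_sym (negbTE (neq_lift i k)).
Qed.


Definition Wm N (c : nat -> int) (r : nat -> nat) : 'M[P]_N :=
  \matrix_(i < N, j < N) pZ (c j - (r i)%:Z).
Definition Mr N c r := \det (Wm N c r).
Definition upd (r : nat -> nat) (i v : nat) := fun t => if t == i then v else r t.

Lemma Mr_eq N c r r' : (forall t, (t < N)%N -> r t = r' t) -> Mr N c r = Mr N c r'.
Proof.
move=> H; rewrite /Mr; congr (\det _); apply/matrixP => i j; rewrite !mxE.
by rewrite H.
Qed.

Lemma Mr_deriv N c r : (Mr N c r)^`() = \sum_(i < N) Mr N c (upd r i (r i).+1).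
Proof.
rewrite /Mr /Wm (deriv_det (fun i j => pZ (c j - (r i)%:Z))).
apply: eq_bigr => i _; congr (\det _); apply/matrixP => k j; rewrite !mxE /upd.
case: (k =P i) => [->|ne]; first by rewrite eqxx deriv_pZ; congr pZ; lia.
have -> : ((k : nat) == i) = false by apply/eqP => E; apply: ne; apply: val_inj.
by [].
Qed.

Lemma Mr_T N c r : \sum_(i < N) Mr N c (upd r i (r i).+2) =
  (\sum_(j < N) ((c j)%:~R * 3%:R) + \sum_(k < N) (- (((r k)%:Z)%:~R * 3%:R))) * Mr N c r
  - 3%:R * ('X * (Mr N c r)^`()).
Proof.
pose f := fun (i j : 'I_N) => pZ (c j - (r i)%:Z).
pose a := fun (j : 'I_N) => ((c j)%:~R * 3%:R : P).
pose b := fun (k : 'I_N) => (- (((r k)%:Z)%:~R * 3%:R) : P).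
transitivity (\sum_(i < N)
   (1 * \det (\matrix_(k, j) if k == i then (a j + b k) * f k j else f k j) +
    (- (3%:R * 'X)) * \det (\matrix_(k, j) if k == i then (f k j)^`() else f k j))).
  apply: eq_bigr => i _; rewrite -det_rowlin /Mr /Wm; congr (\det _).
  apply/matrixP => k j; rewrite !mxE /upd /f /a /b.
  case: (k =P i) => [->|ne]; last first.
    have -> : ((k : nat) == i) = false by apply/eqP => E; apply: ne; apply: val_inj.
    by [].
  rewrite eqxx.
  have -> : (c j - (r i).+2%:Z = (c j - (r i)%:Z) - 2)%R by lia.
  rewrite rec_pZ deriv_pZ intrB; ring.
rewrite big_split /= -big_distrr -big_distrr /= det_weight.
rewrite -(deriv_det f) /Mr /Wm /f.
ring.
Qed.

Lemma Mr_coll N c r (a b : nat) : (a < N)%N -> (b < N)%N -> a != b -> r a = r b ->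
  Mr N c r = 0.
Proof.
move=> ha hb hab E; rewrite /Mr.
apply: (determinant_alternate (i1 := Ordinal ha) (i2 := Ordinal hb)).
  exact: hab.
by move=> j; rewrite !mxE /= E.
Qed.

Lemma Mr_swap N c (r r' : nat -> nat) (i1 i2 : 'I_N) : i1 != i2 ->
  (forall k : 'I_N, r' k = r (tperm i1 i2 k)) -> Mr N c r' = - Mr N c r.
Proof.
move=> ne H.
rewrite /Mr.
have -> : Wm N c r' = xrow i1 i2 (Wm N c r).
  by apply/matrixP => k j; rewrite !mxE H.
rewrite xrowE det_mulmx det_perm odd_tperm ne /= expr1 mulN1r.
done.
Qed.

Ltac updt := rewrite /upd /=; repeat (case: eqP => ?); lia.

Lemma F1 m c : (Mr m.+1 c id)^`() = Mr m.+1 c (upd id m m.+1).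
Proof.
rewrite Mr_deriv big_ord_recr /= big1 ?add0r.
  by apply: Mr_eq => t _; updt.
move=> i _; have := ltn_ord i; move=> hi.
apply: (@Mr_coll _ _ _ i i.+1) => /=; try lia.
by updt.
Qed.

Lemma FT m c : (Mr m.+1 c (upd id m m.+1))^`() +
  \sum_(i < m.+1) Mr m.+1 c (upd id i (id i).+2) = 2%:R * Mr m.+1 c (upd id m m.+2).
Proof.
rewrite Mr_deriv -big_split big_ord_recr /= big1 ?add0r.
  rewrite mulr_natl mulr2n; congr (_ + _); apply: Mr_eq => t _; updt.
move=> i _ /=.
have him := ltn_ord i.
case: (ltnP i.+1 m) => hi.
  rewrite (@Mr_coll _ _ _ i i.+1) ?(@Mr_coll _ _ (upd id i i.+2) i i.+2) ?addr0 //.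
  all: try (by lia); try (by updt).
have E : i.+1 = m by lia.
rewrite (@Mr_swap _ _ (upd (upd id m m.+1) i (upd id m m.+1 i).+1) (upd id i i.+2)
  (widen_ord (leqnSn m) i) ord_max) ?addrN //.
  by apply/eqP => /(congr1 val) /=; lia.
move=> k; case: tpermP => [->|->|/eqP ne1 /eqP ne2] /=; try by updt.
have : (k : nat) != i by apply: contra ne1 => /eqP E1; apply/eqP/val_inj.
have : (k : nat) != m by apply: contra ne2 => /eqP E1; apply/eqP/val_inj.
move=> /eqP ? /eqP ?; updt.
Qed.

Lemma GT m c : (Mr m.+2 c (upd id m.+1 m.+2))^`() -
  \sum_(i < m.+2) Mr m.+2 c (upd id i (id i).+2) =
  2%:R * Mr m.+2 c (upd (upd id m.+1 m.+2) m m.+1).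
Proof.
rewrite Mr_deriv -sumrB big_ord_recr /=.
rewrite (@Mr_eq _ _ (upd (upd id m.+1 m.+2) m.+1 (upd id m.+1 m.+2 m.+1).+1)
   (upd id m.+1 m.+3)); last by move=> t _; updt.
rewrite subrr addr0 big_ord_recr /= big1 ?add0r.
  rewrite (@Mr_swap _ _ (upd (upd id m.+1 m.+2) m (upd id m.+1 m.+2 m).+1) (upd id m m.+2)
    (inord m) (inord m.+1)).
  - rewrite opprK mulr_natl mulr2n; congr (_ + _); apply: Mr_eq => t _; updt.
  - by apply/eqP => /(congr1 val) /=; rewrite !inordK //; lia.
  move=> k; case: tpermP => [->|->|/eqP ne1 /eqP ne2]; rewrite ?inordK //; try by updt.
  have : (k : nat) != m by apply: contra ne1 => /eqP E1; apply/eqP/val_inj; rewrite /= inordK.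
  have : (k : nat) != m.+1 by apply: contra ne2 => /eqP E1; apply/eqP/val_inj; rewrite /= inordK.
  move=> /eqP ? /eqP ?; updt.
move=> i _ /=.
have him := ltn_ord i.
rewrite (@Mr_coll _ _ _ i i.+1) ?(@Mr_coll _ _ (upd id i i.+2) i i.+2) ?subr0 //.
all: try (by lia); try (by updt).
Qed.

Section Pl.
Variable R : idomainType.
Variable k : nat.
Variable M : nat -> nat -> R.

Definition DDm (u v : nat -> R) : 'M[R]_(k.+2) :=
  \matrix_(i, j) if (j : nat) == 0%N then u i else if (j : nat) == 1%N then v i
                 else M i (j - 2)%N.
Definition DD u v := \det (DDm u v).

Definition j1 : 'I_(k.+2) := Ordinal (isT : (1 < k.+2)%N).

Definition kap u (i : 'I_(k.+2)) := cofactor (DDm u (fun _ => 0)) i j1.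

Lemma DD_lin2 u v : DD u v = \sum_(i < k.+2) v i * kap u i.
Proof.
rewrite /DD (expand_det_col _ j1); apply: eq_bigr => i _.
rewrite mxE /=; congr (_ * _); rewrite /kap /cofactor; congr (_ * \det _).
apply/matrixP => a b; rewrite !mxE /=.
case: ifP => // _; case: ifP => // /eqP H; exfalso; move: H.
by rewrite /bump; case: (leqP 1 b) => /= hb; lia.
Qed.

Lemma DD_alt u : DD u u = 0.
Proof.
rewrite /DD -det_tr.
apply: (determinant_alternate (i1 := ord0) (i2 := j1)) => // j.
by rewrite !mxE.
Qed.

Lemma DD_colM u j0 : (j0 < k)%N -> DD u (fun r => M r j0) = 0.
Proof.
move=> hj; have hj2 : (j0.+2 < k.+2)%N by [].
rewrite /DD -det_tr.
apply: (determinant_alternate (i1 := j1) (i2 := Ordinal hj2)) => // j.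
by rewrite !mxE /= !subSS subn0.
Qed.

Lemma DD_swap u v : DD u v = - DD v u.
Proof.
rewrite /DD.
have -> : DDm u v = xcol ord0 j1 (DDm v u).
  apply/matrixP => i j; rewrite !mxE.
  case: tpermP => [->|->|/eqP ne1 /eqP ne2] //=.
  have h0 : (j : nat) != 0%N by apply: contra ne1 => /eqP E1; apply/eqP/val_inj.
  have h1 : (j : nat) != 1%N by apply: contra ne2 => /eqP E1; apply/eqP/val_inj.
  by rewrite (negbTE h0) (negbTE h1).
by rewrite xcolE det_mulmx det_perm odd_tperm /= expr1 mulrN1.
Qed.

Lemma DD_G (l : nat -> R) (x y d : nat -> R) :
  let L := fun w : nat -> R => \sum_(r < k.+2) l r * w r in
  L x = 0 -> L y = 0 -> (forall j, (j < k)%N -> L (fun r => M r j) = 0) ->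
  L d * DD x y = 0.
Proof.
move=> L Lx Ly LM.
pose colf := fun (j : nat) (r : nat) => if j == 0%N then d r else if j == 1%N then x r
   else if j == 2%N then y r else M r (j - 3)%N.
pose Z : 'M[R]_(k.+3) := \matrix_(i, j) if (i : nat) == 0%N then L (colf j) else colf j (i.-1).
have H1 : \det Z = L d * DD x y.
  rewrite (expand_det_row _ ord0) (bigD1 ord0) //= big1 ?addr0.
    rewrite mxE /=; congr (_ * _).
    rewrite /cofactor /= expr0 mul1r /DD; congr (\det _).
    by apply/matrixP => a b; rewrite !mxE /=.
  move=> j ne; rewrite mxE /=.
  case: j ne => [[|[|[|j]]] hj] ne //=.
  - by rewrite Lx mul0r.
  - by rewrite Ly mul0r.
  - rewrite LM ?mul0r //; lia.
have H2 : \det Z = 0.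
  have Hr : forall r : 'I_(k.+2), \sum_j Z (lift ord0 r) j * cofactor Z ord0 j = 0.
    move=> r; move: (congr1 (fun A : 'M[R]_(k.+3) => A (lift ord0 r) ord0) (mul_mx_adj Z)).
    rewrite !mxE /= mulr0n => H; rewrite -[RHS]H; apply: eq_bigr => j _; by rewrite [(\adj Z) j ord0]mxE.
  rewrite (expand_det_row _ ord0).
  transitivity (\sum_j \sum_(r < k.+2) l r * (Z (lift ord0 r) j * cofactor Z ord0 j)).
    apply: eq_bigr => j _; rewrite mxE /= /L big_distrl /=; apply: eq_bigr => r _.
    by rewrite mxE /= mulrA.
  rewrite exchange_big /= big1 // => r _.
  by rewrite -big_distrr /= Hr mulr0.
by rewrite -H1 H2.
Qed.

Lemma plucker a b c d :
  DD a b * DD c d - DD a c * DD b d + DD a d * DD b c = 0.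
Proof.
pose Q := fun x => DD a b * DD c x - DD a c * DD b x + DD a x * DD b c.
pose l := fun r : nat => if (r < k.+2)%N then
   DD a b * kap c (inord r) - DD a c * kap b (inord r) + DD b c * kap a (inord r) else 0.
have HL : forall x, Q x = \sum_(r < k.+2) l r * x r.
  move=> x; rewrite /Q (DD_lin2 c x) (DD_lin2 b x) (DD_lin2 a x) /l.
  move: (DD a b) (DD a c) (DD b c) => A B C.
  rewrite !big_distrr big_distrl /= -sumrB -big_split /=.
  by apply: eq_bigr => r _; rewrite ltn_ord inord_val; ring.
have Qa : Q a = 0 by rewrite /Q (DD_swap c a) (DD_swap b a) DD_alt; ring.
have Qb : Q b = 0 by rewrite /Q (DD_swap c b) DD_alt; ring.
have Qc : Q c = 0 by rewrite /Q DD_alt; ring.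
have QM : forall j, (j < k)%N -> Q (fun r => M r j) = 0.
  by move=> j hj; rewrite /Q !DD_colM // ; ring.
have G1 : Q d * DD a b = 0.
  rewrite HL; apply: (DD_G (l := l)) => /=; rewrite -?HL //.
  by move=> j hj; have := QM j hj; rewrite HL.
have G2 : Q d * DD a c = 0.
  rewrite HL; apply: (DD_G (l := l)) => /=; rewrite -?HL //.
  by move=> j hj; have := QM j hj; rewrite HL.
have G3 : Q d * DD b c = 0.
  rewrite HL; apply: (DD_G (l := l)) => /=; rewrite -?HL //.
  by move=> j hj; have := QM j hj; rewrite HL.
have : Q d * Q d = 0.
  transitivity (DD c d * (Q d * DD a b) - DD b d * (Q d * DD a c) + DD a d * (Q d * DD b c)).
    rewrite {1}/Q; ring.
  by rewrite G1 G2 G3; ring.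
by move/eqP; rewrite mulf_eq0 orbb => /eqP.
Qed.

End Pl.

Lemma det_unit_col n (A : 'M[P]_n) (j0 p : 'I_n) :
  (forall i, A i j0 = (i == p)%:R) ->
  \det A = (-1) ^+ (p + j0) * \det (row' p (col' j0 A)).
Proof.
move=> H; rewrite (expand_det_col _ j0) (bigD1 p) //= big1 ?addr0.
  by rewrite H eqxx mul1r.
by move=> i /negbTE ne; rewrite H ne mul0r.
Qed.

Definition ev (p : nat) := fun i : nat => ((i == p)%:R : P).
Definition Mfun (c : nat -> int) := fun i j : nat => pZ (c j - i%:Z).
Definition cS (c : nat -> int) (d : int) := fun j : nat => if j == 0%N then d else c j.-1.

Lemma bump_ge p t : (p <= t)%N -> bump p t = t.+1.
Proof. by rewrite /bump => ->. Qed.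
Lemma bump_lt p t : (t < p)%N -> bump p t = t.
Proof. by rewrite /bump ltnNge => /negbTE ->. Qed.

Ltac bump1 := match goal with |- context [bump ?p ?t] =>
  lazymatch t with context [bump _ _] => fail | _ =>
    let H := fresh in case: (leqP p t) => H; [rewrite (bump_ge H) | rewrite (bump_lt H)] end end.
Ltac bt := rewrite /upd /=; repeat bump1; repeat (case: eqP => ?); lia.

Lemma DD_ee N c p q : (p < q)%N -> (q < N.+2)%N ->
  DD N (Mfun c) (ev p) (ev q) = (-1) ^+ (p + q.-1) * Mr N c (fun t => bump p (bump q.-1 t)).
Proof.
move=> hpq hq.
have hp : (p < N.+2)%N by lia.
have hq' : (q.-1 < N.+1)%N by lia.
rewrite /DD (@det_unit_col _ _ ord0 (Ordinal hp)); last first.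
  by move=> i; rewrite !mxE.
rewrite (@det_unit_col _ _ ord0 (Ordinal hq')); last first.
  move=> i; rewrite !mxE /= /ev.
  suff -> : (bump p i == q) = (i == Ordinal hq') by [].
  apply/idP/idP => /eqP H; apply/eqP.
    by apply: val_inj => /=; move: H; bt.
  by rewrite H /=; bt.
rewrite /= !addn0 exprD -mulrA; congr (_ * (_ * _)).
rewrite /Mr /Wm; congr (\det _); apply/matrixP => i j; rewrite !mxE /= /Mfun.
by rewrite !subSS subn0.
Qed.

Lemma DD_pe N c d q : (q < N.+2)%N ->
  DD N (Mfun c) (fun i => pZ (d - i%:Z)) (ev q) = (-1) ^+ (q.+1) * Mr N.+1 (cS c d) (bump q).
Proof.
move=> hq.
rewrite /DD (@det_unit_col _ _ (j1 N) (Ordinal hq)); last first.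
  by move=> i; rewrite !mxE.
rewrite /= addn1; congr (_ * _).
rewrite /Mr /Wm; congr (\det _); apply/matrixP => i j; rewrite !mxE /= /Mfun /cS.
by case: j => [[|j] hj] //=; rewrite !subSS subn0.
Qed.


Lemma plk n c d :
  Mr n.+1 c id * Mr n.+2 (cS c d) (upd (upd id n.+1 n.+2) n n.+1)
  - Mr n.+1 c (upd id n n.+1) * Mr n.+2 (cS c d) (upd id n.+1 n.+2)
  + Mr n.+1 c (upd id n n.+2) * Mr n.+2 (cS c d) id = 0.
Proof.
have := @plucker _ n.+1 (Mfun c) (fun i => pZ (d - i%:Z)) (ev n) (ev n.+1) (ev n.+2).
rewrite !DD_pe; try lia.
rewrite !DD_ee; try lia.
rewrite (@Mr_eq _ _ (bump n) (upd (upd id n.+1 n.+2) n n.+1)); last by move=> t ht; bt.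
rewrite (@Mr_eq _ _ (bump n.+1) (upd id n.+1 n.+2)); last by move=> t ht; bt.
rewrite (@Mr_eq _ _ (bump n.+2) id); last by move=> t ht; bt.
rewrite (@Mr_eq _ _ (fun t => bump n.+1 (bump n.+1 t)) id); last by move=> t ht; bt.
rewrite (@Mr_eq _ _ (fun t => bump n (bump n.+1 t)) (upd id n n.+1)); last by move=> t ht; bt.
rewrite (@Mr_eq _ _ (fun t => bump n (bump n t)) (upd id n n.+2)); last by move=> t ht; bt.
rewrite /= !exprD !exprS.
have [->|->] : (-1) ^+ n = 1 :> P \/ (-1) ^+ n = -1 :> P.
  by rewrite -signr_odd; case: (odd n); [right|left]; rewrite ?expr0 ?expr1.
all: move: (Mr n.+1 c id) (Mr n.+2 (cS c d) (upd (upd id n.+1 n.+2) n n.+1))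
  (Mr n.+1 c (upd id n n.+1)) (Mr n.+2 (cS c d) (upd id n.+1 n.+2))
  (Mr n.+1 c (upd id n n.+2)) (Mr n.+2 (cS c d) id) => a1 b3 a2 b2 a3 b1 H.
  by rewrite -(mulr0 (-1 : P)) -H; ring.
by rewrite -(mulr0 (1 : P)) -H; ring.
Qed.

Lemma main0 c d : hirota (3 * (0%:Z - d)) (Mr 0 c id) (Mr 1 (cS c d) id) = 0.
Proof.
rewrite /Mr det_mx00 det_mx11 !mxE /= /cS /=.
have -> : (d - 0%:Z = d)%R by lia.
rewrite /hirota /Dx2 /Dx /= deriv1P.
rewrite !deriv_pZ.
have -> : (d - 1 - 1 = d - 2)%R by lia.
rewrite rec_pZ -mul_polyC rmorph_int !intrM !intrB.
ring.
Qed.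

Lemma mainS n c d :
  hirota (3 * (n.+1%:Z - d)) (Mr n.+1 c id) (Mr n.+2 (cS c d) id) = 0.
Proof.
have hF1 := F1 n c.
have hG1 := F1 n.+1 (cS c d).
have hTF := Mr_T n.+1 c id.
have hTG := Mr_T n.+2 (cS c d) id.
have hFT := FT n c.
have hGT := GT n (cS c d).
have hP := plk n c d.
have d2 : forall p : P, p^`(2) = (p^`())^`() by [].
rewrite /hirota /Dx2 /Dx !d2 hF1 hG1.
rewrite hF1 in hTF; rewrite hG1 in hTG.
rewrite hTF in hFT; rewrite hTG in hGT.
have eA : (Mr n.+1 c (upd id n n.+1))^`() = 2%:R * Mr n.+1 c (upd id n n.+2) -
   ((\sum_(j < n.+1) ((c j)%:~R * 3%:R) + \sum_(k < n.+1) (- (((id k : nat)%:Z)%:~R * 3%:R))) * Mr n.+1 c id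
  - 3%:R * ('X * Mr n.+1 c (upd id n n.+1))).
  by rewrite -hFT; ring.
have eB : (Mr n.+2 (cS c d) (upd id n.+1 n.+2))^`() = 2%:R * Mr n.+2 (cS c d) (upd (upd id n.+1 n.+2) n n.+1) +
   ((\sum_(j < n.+2) ((cS c d j)%:~R * 3%:R) + \sum_(k < n.+2) (- (((id k : nat)%:Z)%:~R * 3%:R))) * Mr n.+2 (cS c d) id
  - 3%:R * ('X * Mr n.+2 (cS c d) (upd id n.+1 n.+2))).
  by rewrite -hGT; ring.
rewrite eA eB.
rewrite [\sum_(j < n.+2) _]big_ord_recl [\sum_(k < n.+2) _]big_ord_recr /=.
rewrite -mul_polyC rmorph_int !intrM !intrB.
have eC : \sum_(i < n.+1) ((cS c d (bump 0 i))%:~R * 3%:R : P) = \sum_(j < n.+1) (c j)%:~R * 3%:R.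
  by apply: eq_bigr => i _; rewrite /cS /bump /=.
have e0 : cS c d 0 = d by [].
rewrite eC e0.
move: hP.
move: (Mr n.+1 c id) (Mr n.+2 (cS c d) (upd (upd id n.+1 n.+2) n n.+1))
  (Mr n.+1 c (upd id n n.+1)) (Mr n.+2 (cS c d) (upd id n.+1 n.+2))
  (Mr n.+1 c (upd id n n.+2)) (Mr n.+2 (cS c d) id) => a1 b3 a2 b2 a3 b1 H.
rewrite -(mulr0 (2%:R : P)) -H.
ring.
Qed.

Lemma mainN N c d : hirota (3 * (N%:Z - d)) (Mr N c id) (Mr N.+1 (cS c d) id) = 0.
Proof. by case: N => [|n]; [apply: main0 | apply: mainS]. Qed.

Lemma hM m k : h m k = Mr m (fun j => (k + j)%:Z) id.
Proof.
rewrite /h /Mr /Wm; congr (\det _); apply/matrixP => i j; rewrite !mxE.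
by congr pZ; lia.
Qed.

Lemma hS0 m n : h m n = Mr m.+1 (cS (fun j => (n.+1 + j)%:Z) 0) id.
Proof.
rewrite /Mr (@det_unit_col _ _ ord0 ord0); last first.
  move=> i; rewrite !mxE /cS /=.
  case: i => [[|i] hi] /=; first by rewrite pS0.
  by [].
rewrite /= expr0 mul1r /h; congr (\det _); apply/matrixP => i j; rewrite !mxE /cS /=.
by congr pZ; rewrite /bump leq0n add1n; lia.
Qed.

Lemma hS1 m n : h m.+1 n = Mr m.+1 (cS (fun j => (n.+1 + j)%:Z) n) id.
Proof.
rewrite /h /Mr /Wm; congr (\det _); apply/matrixP => i j; rewrite !mxE /cS.
case: j => [[|j] hj] /=; congr pZ; lia.
Qed.

Lemma hS2 m n : h m.+1 n = (-1) ^+ m * Mr m.+1 (cS (fun j => (n + j)%:Z) (n + m)%:Z) id.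
Proof.
rewrite /h (expand_det_col _ ord_max) /Mr (expand_det_col _ ord0) big_distrr.
apply: eq_bigr => i _; rewrite !mxE /cofactor /=.
have -> : row' i (col' ord_max (\matrix_(i0, j) pZ (n%:Z - i0%:Z + j%:Z))) =
          row' i (col' ord0 (Wm m.+1 (cS (fun j : nat => (n + j)%:Z) (n + m)%:Z) id)).
  apply/matrixP => a b; rewrite !mxE /cS /=.
  have hb := ltn_ord b.
  congr pZ; rewrite (@bump_lt m b) // /bump; case: (leqP i a) => /= _; lia.
have -> : (n%:Z - i%:Z + m%:Z = (n + m)%:Z - i%:Z)%R by lia.
rewrite addn0 exprD; ring.
Qed.

Lemma hirota_sign k F G m : hirota k F ((-1) ^+ m * G) = (-1) ^+ m * hirota k F G.
Proof.
have ds : ((-1) ^+ m : P)^`() = 0 by rewrite -signr_odd deriv_sign.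
have d2 : forall p : P, p^`(2) = (p^`())^`() by [].
rewrite /hirota /Dx2 /Dx !d2 !derivM ds !mul0r !add0r derivM ds mul0r add0r.
rewrite -!mul_polyC; ring.
Qed.

Theorem lemma5p7 (m n : nat) :
  [/\ hirota (3 * m%:Z) (h m n.+1) (h m n) = 0,
      hirota (3 * (m%:Z - n%:Z)) (h m n.+1) (h m.+1 n) = 0
    & hirota (- (3 * n%:Z)) (h m n) (h m.+1 n) = 0].
Proof.
split.
- rewrite (hM m n.+1) hS0.
  have := mainN m (fun j => (n.+1 + j)%:Z) 0.
  by rewrite subr0.
- rewrite (hM m n.+1) hS1.
  exact: mainN.
- rewrite (hM m n) hS2 hirota_sign.
  have -> : (- (3 * n%:Z) = 3 * (m%:Z - (n + m)%:Z))%R by lia.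
  by rewrite mainN mulr0.
Qed.
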